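(* Let $\varphi$ be a skew-morphism of a finite group $A$ and let $\Pi$ be a set of primes. Then $\mathrm{Orbit}^\Pi\varphi=\{x\in A : |O_x| \text{ is a } \Pi\text{-number}\}$ is a $\varphi$-invariant subgroup of $A$ containing $\mathrm{Fix}\,\varphi$.
   Context: A skew-morphism of a finite group $A$ is a permutation $\varphi$ of the set $A$ with $\varphi(1)=1$ for which there exists a function $\pi:A\to\mathbb{Z}_n$, where $n$ is the order of $\varphi$ as a permutation, such that $\varphi(xy)=\varphi(x)\varphi^{\pi(x)}(y)$ for all $x,y\in A$. A subset $N\subseteq A$ is $\varphi$-invariant if $\varphi(N)=N$. $O_x$ denotes the orbit of $\varphi$ containing $x$, and $\mathrm{Fix}\,\varphi=\{x\in A:\varphi(x)=x\}$. For a set $\Pi$ of primes, a positive integer is a $\Pi$-number if all its prime divisors lie in $\Pi$; by convention $1$ is a $\Pi$-number. *)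

(* Defs.v *)
From HB Require Import structures.
From mathcomp Require Import all_boot all_fingroup.
Set Implicit Arguments. Unset Strict Implicit. Unset Printing Implicit Defensive.

Local Open Scope group_scope.

(* A skew-morphism of a finite group A (here a subgroup A of a finite group
   type gT): a permutation phi of gT supported on A (hence a permutation of
   the set A), with phi 1 = 1, and a power function pi : gT -> nat with
   phi (x * y) = phi x * (phi ^+ pi x) y for all x, y in A.  Exponents are
   taken mod the order #[phi] of phi automatically since phi ^+ #[phi] = 1. *)
Definition skew_morphism (gT : finGroupType) (A : {set gT}) (phi : {perm gT}) :=
  [/\ perm_on A phi, phi 1 = 1 &
      exists pi : gT -> nat,
        forall x y, x \in A -> y \in A -> phi (x * y) = phi x * (phi ^+ pi x) y].

Definition orb (gT : finGroupType) (phi : {perm gT}) (x : gT) : {set gT} :=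
  porbit phi x.

Definition OrbitPi (gT : finGroupType) (A : {set gT}) (phi : {perm gT})
  (Pi : nat_pred) : {set gT} :=
  [set x in A | Pi.-nat #|orb phi x|].

Definition Fixset (gT : finGroupType) (A : {set gT}) (phi : {perm gT}) : {set gT} :=
  [set x in A | phi x == x].

(* Main.v *)
Require Import Defs.
From HB Require Import structures.
From mathcomp Require Import all_boot all_fingroup.

Set Implicit Arguments. Unset Strict Implicit. Unset Printing Implicit Defensive.

Lemma iter_period (T : Type) (f : T -> T) x r :
  iter r f x = x -> forall q, iter (q * r) f x = x.
Proof.
move=> H; elim=> [|q IH] //; by rewrite mulSn iterD IH H.
Qed.

Lemma porbit_dvd (T : finType) (s : {perm T}) x k :
  iter k s x = x -> #|porbit s x| %| k.
Proof.
move=> Hk.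
set n := #|porbit s x|.
have n0 : 0 < n by rewrite lt0n card_porbit_neq0.
have Hn : iter n s x = x by exact: iter_porbit.
have Hr : iter (k %% n) s x = x.
  by rewrite (divn_eq k n) addnC iterD iter_period in Hk.
rewrite /dvdn; apply/eqP.
case Er: (k %% n) Hr => [//|r] Hr.
have lt : r.+1 < n by rewrite -Er ltn_pmod.
have : n <= r.+1.
  rewrite -[r.+1](size_traject s x) -/n.
  apply: leq_trans (card_size _).
  apply: subset_leq_card; apply/subsetP=> y /porbitP[i ->].
  rewrite permX (divn_eq i r.+1) addnC iterD iter_period //.
  apply/trajectP; exists (i %% r.+1) => //; exact: ltn_pmod.
by rewrite leqNgt lt.
Qed.

Lemma porbit_fix (T : finType) (s : {perm T}) x : s x = x -> #|porbit s x| = 1.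
Proof.
move=> H; have -> : porbit s x = [set x].
  apply/setP=> y; rewrite inE; apply/porbitP/eqP=> [[i ->]|->].
    exact: permX_fix.
  by exists 0; rewrite expg0 perm1.
exact: cards1.
Qed.

Lemma skew_iter (gT : finGroupType) (A : {group gT}) (phi : {perm gT})
  (pi : gT -> nat) :
  perm_on A phi ->
  (forall x y, x \in A -> y \in A -> phi (x * y)%g = (phi x * (phi ^+ pi x)%g y)%g) ->
  forall x, x \in A -> forall k, exists s, forall y, y \in A ->
    iter k phi (x * y)%g = (iter k phi x * iter s phi y)%g.
Proof.
move=> pon Hpi x xA; elim=> [|k [s IH]].
  by exists 0.
exists (s + pi (iter k phi x)) => y yA.
have iA : forall j z, z \in A -> iter j phi z \in A.
  by move=> j z zA; elim: j => //= j IHj; rewrite (perm_closed _ pon).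
by rewrite /= IH // Hpi ?iA // permX addnC iterD.
Qed.

Theorem mainTheorem2 (gT : finGroupType) (A : {group gT}) (phi : {perm gT})
  (Pi : nat_pred) :
  skew_morphism A phi ->
  [/\ group_set (OrbitPi A phi Pi), OrbitPi A phi Pi \subset A,
      phi @: OrbitPi A phi Pi = OrbitPi A phi Pi
    & Fixset A phi \subset OrbitPi A phi Pi].
Proof.
case=> pon phi1 [pi Hpi].
have iA : forall j z, z \in A -> iter j phi z \in A.
  by move=> j z zA; elim: j => //= j IHj; rewrite (perm_closed _ pon).
have key := skew_iter pon Hpi.
split.
- apply/group_setP; split.
    by rewrite inE group1 /orb porbit_fix.
  move=> x y; rewrite !inE /orb => /andP[xA px] /andP[yA py].
  rewrite groupM //=.
  set n := #|porbit phi x|; set m := #|porbit phi y|.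
  have Hn : iter n phi x = x by exact: iter_porbit.
  have Hm : iter m phi y = y by exact: iter_porbit.
  have [d Hd] := key x xA n.
  have Hj : forall j z, z \in A -> iter (j * n) phi (x * z)%g = (x * iter (j * d) phi z)%g.
    elim=> [|j IH] z zA; first by [].
    by rewrite mulSn iterD IH // Hd ?iA // Hn mulSn iterD.
  have : iter (m * n) phi (x * y)%g = (x * y)%g.
    by rewrite Hj // mulnC iter_period.
  move/porbit_dvd => dv.
  apply: pnat_dvd dv _; by rewrite pnatM py px.
- by apply/subsetP=> x; rewrite inE => /andP[].
- apply/eqP; rewrite eqEcard card_imset ?leqnn ?andbT; last exact: perm_inj.
  apply/subsetP=> _ /imsetP[x xS ->].
  move: xS; rewrite !inE /orb (perm_closed _ pon) => /andP[xA px].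
  have := porbit_perm phi 1 x; rewrite expg1 => ->.
  by rewrite xA.
- apply/subsetP=> x; rewrite !inE /orb => /andP[xA /eqP fx].
  by rewrite xA porbit_fix.
Qed.
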